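(* There is an element-based generator $\mathds{G}$ such that for every countable collection of languages $\mathcal{L}=\{L_1,L_2,\dots\}$, every target language $K\in\mathcal{L}$, and every enumeration of $K$ with $o(1)$-noise and arbitrary omissions, $\mathds{G}$ generates in the limit from $K$; that is, there is a finite $n^\star$ such that $w_n\in K$ for all $n\ge n^\star$, where $w_n$ is the output of $\mathds{G}$ at step $n$.
   Context: The universe is $U=\mathbb{N}$ (a countable set of strings, identified with $\mathbb{N}$). A language is an infinite subset of $U$; a collection is a countable family $\mathcal{L}=\{L_1,L_2,\dots\}$ of languages. An enumeration is a sequence $x_1,x_2,\dots$ of distinct elements of $U$; write $S_n=\{x_1,\dots,x_n\}$. The empirical noise rate of a language $L$ is $R(L;x_{1:n})=\frac1n|\{t\le n: x_t\notin L\}|$. An enumeration of a language $L$ with $o(1)$-noise is a sequence in which every element of $L$ appears exactly once and $R(L;x_{1:n})\to 0$. An enumeration of $K$ with $o(1)$-noise and arbitrary omissions is an enumeration with $o(1)$-noise of some $\hat K\subseteq K$ with $|\hat K|=\infty$. An element-based generator is a sequence of maps $\mathds{G}_n$ that, given $x_1,\dots,x_n$, outputs $w_n\in U\setminus(S_n\cup\{w_1,\dots,w_{n-1}\})$; it may use the collection $\mathcal{L}$ but not the target $K$. *)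

(* Defs.v *)
From Stdlib Require Import Reals List Arith.
Import ListNotations.
Open Scope R_scope.

Definition language := nat -> bool.

(* A collection {L_1, L_2, ...} is indexed by nat (L i = L_{i+1}). *)
Definition collection := nat -> language.

Definition infinite_lang (L : language) : Prop :=
  forall m : nat, exists k : nat, (m <= k)%nat /\ L k = true.

(* Enumerations are 0-indexed sequences x : nat -> nat: x t = x_{t+1}. *)
Definition distinct_seq (x : nat -> nat) : Prop :=
  forall s t : nat, x s = x t -> s = t.

Definition prefix (x : nat -> nat) (n : nat) : list nat := map x (seq 0 n).

Definition noise_count (L : language) (x : nat -> nat) (n : nat) : nat :=
  length (filter (fun t => negb (L (x t))) (seq 0 n)).

(* Empirical noise rate R(L; x_{1:n}) (the value at n = 0 is irrelevant). *)
Definition noise_rate (L : language) (x : nat -> nat) (n : nat) : R :=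
  INR (noise_count L x n) / INR n.

Definition enum_o1_noise (L : language) (x : nat -> nat) : Prop :=
  distinct_seq x /\
  (forall k : nat, L k = true -> exists t : nat, x t = k) /\
  Un_cv (noise_rate L x) 0.

Definition enum_o1_noise_omissions (K : language) (x : nat -> nat) : Prop :=
  exists Khat : language,
    (forall k : nat, Khat k = true -> K k = true) /\
    infinite_lang Khat /\
    enum_o1_noise Khat x.

Definition generator := collection -> list nat -> nat.

Definition gen_output (G : generator) (C : collection) (x : nat -> nat) (n : nat) : nat :=
  G C (prefix x n).

Definition valid_generator_on (G : generator) (C : collection) : Prop :=
  forall x : nat -> nat, distinct_seq x ->
  forall n : nat, (1 <= n)%nat ->
    ~ In (gen_output G C x n) (prefix x n) /\
    (forall k : nat, (1 <= k)%nat -> (k < n)%nat ->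
       gen_output G C x k <> gen_output G C x n).

Definition generates_in_limit (G : generator) (C : collection) (K : language)
  (x : nat -> nat) : Prop :=
  exists nstar : nat, forall n : nat, (nstar <= n)%nat -> (1 <= n)%nat ->
    K (gen_output G C x n) = true.

(* Main.v *)
Require Import Defs.
From Stdlib Require Import Reals List Arith Lia Lra ClassicalEpsilon Classical FinFun FunctionalExtensionality.
Import ListNotations.
Open Scope bool_scope.
Open Scope nat_scope.

Definition upd (T : nat -> bool) (k : nat) : nat -> bool :=
  fun j => if Nat.eqb j k then true else T j.
Definition memI (C : collection) (T : nat -> bool) (m y : nat) : bool :=
  forallb (fun j => negb (T j) || C j y) (seq 0 m).
Definition cnt (f : nat -> bool) (l : list nat) : nat := length (filter f l).
Definition Dn C T m p := cnt (fun y => negb (memI C T m y)) p.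
Definition inf (P : nat -> bool) : Prop := forall m, exists k, (m <= k)%nat /\ P k = true.
Definition okb C (p : list nat) T k : bool :=
  if excluded_middle_informative
       ((Dn C (upd T k) (S k) p * (k+2) <= (k+1) * length p)%nat /\ inf (memI C (upd T k) (S k)))
  then true else false.
Fixpoint gr C p k : nat -> bool :=
  match k with
  | 0 => fun _ => false
  | S k' => let T := gr C p k' in if okb C p T k' then upd T k' else T
  end.
Definition target C p := memI C (gr C p (length p)) (length p).
Definition choose (P : nat -> bool) (forb : list nat) : nat :=
  match excluded_middle_informative (exists y, P y = true /\ ~ In y forb) with
  | left H => proj1_sig (constructive_indefinite_description _ H)
  | right _ => S (list_max forb)
  end.
Fixpoint outs C (l : list nat) k : list nat :=
  match k with
  | 0 => []
  | S k' => let o := outs C l k' in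
      o ++ [choose (target C (firstn (S k') l)) (firstn (S k') l ++ o)]
  end.
Definition Gen : generator := fun C l => choose (target C l) (l ++ outs C l (pred (length l))).

Lemma choose_fresh P forb : ~ In (choose P forb) forb.
Proof.
  unfold choose. destruct excluded_middle_informative as [H|H].
  - destruct (constructive_indefinite_description _ H) as [y [Hy1 Hy]]. simpl. exact Hy.
  - intro Hin. assert (Hl := proj1 (list_max_le forb (list_max forb)) (le_n _)).
    rewrite Forall_forall in Hl. specialize (Hl _ Hin). lia.
Qed.

Lemma choose_P P forb : (exists y, P y = true /\ ~ In y forb) -> P (choose P forb) = true.
Proof.
  intro E. unfold choose. destruct excluded_middle_informative as [H|H].
  - destruct (constructive_indefinite_description _ H) as [y [Hy Hy2]]. simpl. exact Hy.
  - contradiction.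
Qed.

Lemma inf_fresh P l : inf P -> exists y, P y = true /\ ~ In y l.
Proof.
  intro HP. destruct (HP (S (list_max l))) as [k [Hk Pk]]. exists k. split; auto.
  intro Hin. assert (Hl := proj1 (list_max_le l (list_max l)) (le_n _)).
  rewrite Forall_forall in Hl. specialize (Hl _ Hin). lia.
Qed.

Lemma cnt_le f l : (cnt f l <= length l)%nat.
Proof. unfold cnt; induction l; simpl; [lia|destruct (f a); simpl; lia]. Qed.

Lemma cnt_part f l : (cnt f l + cnt (fun y => negb (f y)) l = length l)%nat.
Proof. unfold cnt; induction l; simpl; [lia|destruct (f a); simpl; lia]. Qed.

Lemma cnt_and a b l : (cnt (fun y => negb (a y && b y)) l <= cnt (fun y => negb (a y)) l + cnt (fun y => negb (b y)) l)%nat.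
Proof. unfold cnt; induction l as [|h l IH]; simpl; [lia|destruct (a h), (b h); simpl; lia]. Qed.

Lemma cnt_mono f g l : (forall y, f y = true -> g y = true) -> (cnt f l <= cnt g l)%nat.
Proof.
  intro H. unfold cnt; induction l as [|h l IH]; simpl; [lia|].
  destruct (f h) eqn:E. rewrite (H _ E). simpl; lia. destruct (g h); simpl; lia.
Qed.

Lemma cnt_map f (g : nat -> nat) (l : list nat) : cnt f (map g l) = length (filter (fun t => f (g t)) l).
Proof. unfold cnt; induction l as [|h l IH]; simpl; [auto|destruct (f (g h)); simpl; lia]. Qed.

Lemma cnt_pigeon f l F : NoDup l -> (forall y, In y l -> f y = true -> y < F)%nat -> (cnt f l <= F)%nat.
Proof.
  intros Hn Hb. unfold cnt. rewrite <- (length_seq F 0).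
  apply NoDup_incl_length. apply NoDup_filter; auto.
  intros y Hy. apply filter_In in Hy. destruct Hy. apply in_seq. specialize (Hb y H H0). lia.
Qed.

Lemma forallb_ext_in' (f g : nat -> bool) l : (forall j, In j l -> f j = g j) -> forallb f l = forallb g l.
Proof. induction l as [|h l IH]; simpl; intros H; auto. rewrite H by auto. rewrite IH; auto. Qed.

Lemma memI_ext C T T' m : (forall j, j < m -> T j = T' j)%nat -> memI C T m = memI C T' m.
Proof.
  intro H. apply functional_extensionality. intro y. unfold memI.
  apply forallb_ext_in'. intros j Hj. apply in_seq in Hj. rewrite H by lia. reflexivity.
Qed.

Lemma memI_S C T k y : memI C T (S k) y = memI C T k y && (negb (T k) || C k y).
Proof. unfold memI. rewrite seq_S, forallb_app. simpl. rewrite Bool.andb_true_r. reflexivity. Qed.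

Lemma memI_upd C T k : memI C (upd T k) (S k) = fun y => memI C T k y && C k y.
Proof.
  apply functional_extensionality; intro y. rewrite memI_S.
  rewrite (memI_ext C (upd T k) T k). unfold upd. rewrite Nat.eqb_refl. reflexivity.
  intros j Hj. unfold upd. destruct (Nat.eqb_spec j k); [lia|auto].
Qed.

Lemma gr_above C p k j : k <= j -> gr C p k j = false.
Proof.
  revert j; induction k; intros j Hj; simpl; auto.
  destruct (okb C p (gr C p k) k); auto. unfold upd. destruct (Nat.eqb_spec j k); [lia|].
  apply IHk; lia. apply IHk; lia.
Qed.

Lemma gr_mono C p k j : gr C p k j = true -> gr C p (S k) j = true.
Proof. intro H. simpl. destruct okb; auto. unfold upd. destruct (j =? k); auto. Qed.

Lemma gr_mono' C p k k' j : k <= k' -> gr C p k j = true -> gr C p k' j = true.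
Proof. induction 1; auto. intro Hg. apply gr_mono; auto. Qed.

Lemma memI_notin C T k : T k = false -> memI C T (S k) = memI C T k.
Proof. intro H. apply functional_extensionality; intro y. rewrite memI_S, H. simpl. apply Bool.andb_true_r. Qed.

Lemma gr_inf C p k : inf (memI C (gr C p k) k).
Proof.
  induction k; simpl.
  - intro m. exists m. split; auto.
  - unfold okb. destruct excluded_middle_informative as [[H1 H2]|H]. exact H2.
    rewrite memI_notin. exact IHk. apply gr_above; auto.
Qed.

Lemma gr_D C p k : Dn C (gr C p k) k p * (k+1) <= k * length p.
Proof.
  induction k; simpl.
  - unfold Dn, cnt, memI. simpl. induction p; simpl; auto.
  - unfold okb. destruct excluded_middle_informative as [[H1 H2]|H]. lia.
    idtac.
    unfold Dn in *. rewrite (memI_notin C _ k) by (apply gr_above; auto). pose proof (cnt_le (fun y => negb (memI C (gr C p k) k y)) p). nia.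
Qed.

Lemma outs_ext C j l l' : firstn j l = firstn j l' -> outs C l j = outs C l' j.
Proof.
  revert l l'. induction j; intros l l' H; [reflexivity|].
  assert (firstn j l = firstn j l').
  { assert (E: forall m : list nat, firstn j m = firstn j (firstn (S j) m)).
    { intro m. rewrite firstn_firstn. f_equal. lia. }
    rewrite (E l), (E l'), H. reflexivity. }
  cbn [outs]. rewrite (IHj l l' H0), H. reflexivity.
Qed.

Lemma outs_in C l j k : j < k ->
  In (choose (target C (firstn (S j) l)) (firstn (S j) l ++ outs C l j)) (outs C l k).
Proof.
  induction 1; simpl; apply in_or_app; [right; left; auto|left; auto].
Qed.

Lemma prefix_firstn x k n : k <= n -> firstn k (prefix x n) = prefix x k.
Proof.
  intro H. unfold prefix. rewrite firstn_map. f_equal.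
  replace n with (k + (n - k)) by lia. rewrite seq_app, firstn_app, length_seq.
  rewrite Nat.sub_diag. simpl. rewrite app_nil_r. 
  rewrite firstn_all2; auto. rewrite length_seq; auto.
Qed.

Lemma length_prefix x n : length (prefix x n) = n.
Proof. unfold prefix. rewrite length_map, length_seq. auto. Qed.

Lemma valid_all C : valid_generator_on Gen C.
Proof.
  intros x Hx n Hn. unfold gen_output, Gen. split.
  - intro Hin. apply (choose_fresh (target C (prefix x n)) (prefix x n ++ outs C (prefix x n) (pred (length (prefix x n))))).
    apply in_or_app; auto.
  - intros k Hk1 Hkn Heq.
    apply (choose_fresh (target C (prefix x n)) (prefix x n ++ outs C (prefix x n) (pred (length (prefix x n))))).
    rewrite <- Heq. apply in_or_app; right. rewrite !length_prefix.
    destruct k as [|j]; [lia|].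
    rewrite (outs_ext C (pred (S j)) (prefix x (S j)) (prefix x n)).
    2:{ simpl. rewrite !prefix_firstn by lia. auto. }
    rewrite <- (prefix_firstn x (S j) n) at 1 2 by lia. simpl pred.
    apply outs_in. lia.
Qed.

Lemma hc_of (L : language) x : Un_cv (noise_rate L x) 0 ->
  forall m, (1 <= m)%nat -> exists N, forall n, (N <= n)%nat -> (m * noise_count L x n <= n)%nat.
Proof.
  intros Hu m Hm.
  assert (Hd : (0 < INR m)%R) by (apply lt_0_INR; lia).
  destruct (Hu (/ INR m)%R (Rinv_0_lt_compat _ Hd)) as [N HN].
  exists (Nat.max N 1). intros n Hn.
  specialize (HN n ltac:(lia)). unfold R_dist, noise_rate in HN.
  rewrite Rminus_0_r in HN. apply Rabs_def2 in HN. destruct HN as [HN _].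
  assert (Hb : (0 < INR n)%R) by (apply lt_0_INR; lia).
  set (a := INR (noise_count L x n)) in *.
  assert (H : (a / INR n * (INR n * INR m) < / INR m * (INR n * INR m))%R).
  { apply Rmult_lt_compat_r; [apply Rmult_lt_0_compat; auto| auto]. }
  replace (a / INR n * (INR n * INR m))%R with (a * INR m)%R in H by (field; lra).
  replace (/ INR m * (INR n * INR m))%R with (INR n) in H by (field; lra).
  unfold a in H. rewrite <- mult_INR in H. apply INR_lt in H. lia.
Qed.

Open Scope bool_scope.
Open Scope nat_scope.

Lemma noise_cnt L x n : noise_count L x n = cnt (fun y => negb (L y)) (prefix x n).
Proof. unfold noise_count, prefix. rewrite cnt_map. reflexivity. Qed.

Lemma nodup_prefix x n : distinct_seq x -> NoDup (prefix x n).
Proof. intro H. unfold prefix. apply Injective_map_NoDup. intros a b; apply H. apply seq_NoDup. Qed.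

Fixpoint all_vecs k : list (list bool) :=
  match k with
  | 0 => [[]]
  | S k => flat_map (fun v => [v ++ [false]; v ++ [true]]) (all_vecs k)
  end.

Lemma all_vecs_in (T : nat -> bool) k : In (map T (seq 0 k)) (all_vecs k).
Proof.
  induction k; [simpl; auto|]. cbn [all_vecs]. rewrite seq_S, map_app. simpl.
  apply in_flat_map. exists (map T (seq 0 k)). split; auto.
  destruct (T k); simpl; auto.
Qed.

Lemma unif_list (P : list bool -> nat -> Prop) l :
  (forall v, In v l -> exists N, forall n, N <= n -> P v n) ->
  exists N, forall v, In v l -> forall n, N <= n -> P v n.
Proof.
  induction l as [|h l IH]; intros H.
  - exists 0. intros v [].
  - destruct (H h (or_introl eq_refl)) as [N1 H1].
    destruct IH as [N2 H2]. intros v Hv; apply H; right; auto.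
    exists (Nat.max N1 N2). intros v [<-|Hv] n Hn. apply H1; lia. apply H2; auto; lia.
Qed.

Section Main.
Variables (C : collection) (z : nat) (x : nat -> nat) (Khat : language).
Hypothesis Hsub : forall k, Khat k = true -> C z k = true.
Hypothesis Hx : distinct_seq x.
Hypothesis Hhc : forall m, 1 <= m -> exists N, forall n, N <= n -> m * noise_count Khat x n <= n.

Lemma cz_le n : cnt (fun y => negb (C z y)) (prefix x n) <= noise_count Khat x n.
Proof.
  rewrite noise_cnt. apply cnt_mono. intros y Hy. destruct (Khat y) eqn:E; auto.
  rewrite (Hsub _ E) in Hy. discriminate.
Qed.

Lemma perT T : exists N, forall n, N <= n ->
  Dn C T z (prefix x n) * (z+1) <= z * n -> inf (memI C (upd T z) (S z)).
Proof.
  destruct (classic (inf (memI C (upd T z) (S z)))) as [Hi|Hni].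
  { exists 0; auto. }
  assert (HF : exists F, forall k, F <= k -> memI C (upd T z) (S z) k = false).
  { apply not_all_ex_not in Hni. destruct Hni as [F HF]. exists F. intros k Hk.
    destruct (memI C (upd T z) (S z) k) eqn:E; auto. exfalso; apply HF. exists k; auto. }
  destruct HF as [F HF].
  destruct (Hhc (2 * (z+1)) ltac:(lia)) as [N1 H1].
  exists (Nat.max N1 (2 * F * (z+1) + 1)). intros n Hn HD. exfalso.
  set (p := prefix x n) in *.
  assert (A : cnt (memI C (upd T z) (S z)) p <= F).
  { apply cnt_pigeon. apply nodup_prefix; auto. intros y _ Hy.
    destruct (Nat.lt_ge_cases y F); auto. rewrite HF in Hy; auto. discriminate. }
  pose proof (cnt_part (memI C (upd T z) (S z)) p) as B.
  unfold p in B; rewrite length_prefix in B; fold p in B.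
  rewrite memI_upd in A, B.
  pose proof (cnt_and (memI C T z) (C z) p) as Cc.
  pose proof (cz_le n) as Dd. fold p in Dd.
  specialize (H1 n ltac:(lia)).
  unfold Dn in HD.
  set (D := cnt (fun y => negb (memI C T z y)) p) in *.
  set (ch := noise_count Khat x n) in *.
  assert (n * (z+1) <= F * (z+1) + D * (z+1) + ch * (z+1)) by nia.
  nia.
Qed.

Lemma unifT : exists N, forall T n, N <= n ->
  Dn C T z (prefix x n) * (z+1) <= z * n -> inf (memI C (upd T z) (S z)).
Proof.
  destruct (unif_list (fun v n => Dn C (fun j => nth j v false) z (prefix x n) * (z+1) <= z * n ->
      inf (memI C (upd (fun j => nth j v false) z) (S z))) (all_vecs z)) as [N HN].
  { intros v _. apply perT. }
  exists N. intros T n Hn.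
  specialize (HN (map T (seq 0 z)) (all_vecs_in T z) n Hn).
  assert (Ag : forall j, j < z -> T j = nth j (map T (seq 0 z)) false).
  { intros j Hj. rewrite nth_indep with (d' := T 0) by (rewrite length_map, length_seq; auto).
    rewrite map_nth, seq_nth; auto. }
  unfold Dn in *. rewrite (memI_ext C T _ z Ag).
  rewrite (memI_ext C (upd T z) (upd (fun j => nth j (map T (seq 0 z)) false) z) (S z)).
  exact HN.
  intros j Hj. unfold upd. destruct (Nat.eqb_spec j z); auto. apply Ag; lia.
Qed.

Lemma main_lim : generates_in_limit Gen C (C z) x.
Proof.
  destruct unifT as [N1 H1].
  destruct (Hhc ((z+1)*(z+2)) ltac:(lia)) as [N2 H2].
  exists (Nat.max (S z) (Nat.max N1 N2)). intros n Hn _.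
  set (p := prefix x n).
  assert (Hlp : length p = n) by apply length_prefix.
  assert (Hok : okb C p (gr C p z) z = true).
  { unfold okb. destruct excluded_middle_informative as [|Hno]; auto. exfalso; apply Hno.
    pose proof (gr_D C p z) as GD. rewrite Hlp in GD |- *.
    split.
    - unfold Dn in *. rewrite memI_upd.
      pose proof (cnt_and (memI C (gr C p z) z) (C z) p) as Cc.
      pose proof (cz_le n) as Dd. fold p in Dd.
      specialize (H2 n ltac:(lia)).
      set (D := cnt (fun y => negb (memI C (gr C p z) z y)) p) in *.
      set (ch := noise_count Khat x n) in *.
      set (E := cnt (fun y => negb (memI C (gr C p z) z y && C z y)) p) in *.
      assert (E * (z+2) * (z+1) <= (z+1) * n * (z+1)) by nia.
      nia.
    - apply (H1 (gr C p z) n). lia. exact GD. }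
  assert (Hz : gr C p n z = true).
  { apply (gr_mono' C p (S z)). lia. simpl. rewrite Hok. unfold upd. rewrite Nat.eqb_refl. auto. }
  unfold gen_output, Gen. fold p.
  assert (Ht := choose_P (target C p) (p ++ outs C p (pred (length p)))).
  set (w := choose (target C p) (p ++ outs C p (pred (length p)))) in *.
  assert (Tw : target C p w = true).
  { apply Ht. apply inf_fresh. unfold target. apply gr_inf. }
  unfold target, memI in Tw. rewrite forallb_forall in Tw.
  assert (Hin : In z (seq 0 (length p))) by (apply in_seq; lia).
  rewrite Hlp in Tw, Hin. specialize (Tw z Hin). rewrite Hz in Tw. exact Tw.
Qed.
End Main.

Theorem theorem5p1 :
  exists G : generator,
    forall C : collection,
      (forall i : nat, infinite_lang (C i)) ->
      valid_generator_on G C /\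
      (forall (i : nat) (x : nat -> nat),
          enum_o1_noise_omissions (C i) x ->
          generates_in_limit G C (C i) x).
Proof.
  exists Gen. intros C _. split.
  - apply valid_all.
  - intros i x [Khat [Hsub [_ [Hd [_ Hcv]]]]].
    apply (main_lim C i x Khat Hsub Hd).
    apply hc_of; auto.
Qed.
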